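(* Let $n\ge 2$ and let $A$ be an associative (not necessarily unital) algebra over a field satisfying the identity $x_1x_2\cdots x_{n-1}x_n=x_nx_2\cdots x_{n-1}x_1$ (i.e. the identity associated with the transposition $(1\,n)\in S_n$). Then $A$ is eventually commutative of degree $n+1$.
   Context: An algebra $A$ satisfies an identity $x_1\cdots x_m=x_{\tau(1)}\cdots x_{\tau(m)}$ (with $\tau\in S_m$) if $a_1\cdots a_m=a_{\tau(1)}\cdots a_{\tau(m)}$ for all $a_1,\dots,a_m\in A$. $A$ is eventually commutative of degree $k$ if it satisfies $x_1\cdots x_k=x_{\tau(1)}\cdots x_{\tau(k)}$ for every $\tau\in S_k$. *)

(* Defs.v *)
From HB Require Import structures.
From mathcomp Require Import all_boot all_order all_algebra all_fingroup.
Set Implicit Arguments. Unset Strict Implicit. Unset Printing Implicit Defensive.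
Import GRing.Theory.
Local Open Scope ring_scope.

Definition is_assoc_algebra (K : fieldType) (V : lmodType K)
    (mul : V -> V -> V) : Prop :=
  [/\ associative mul,
      (forall (a : K) (x y z : V), mul (a *: x + y) z = a *: mul x z + mul y z)
    & (forall (a : K) (x y z : V), mul z (a *: x + y) = a *: mul z x + mul z y)].

(* The empty list is sent to
   an arbitrary value x0 (never used below since m >= 1 in all uses). *)
Definition mprod (T : Type) (mul : T -> T -> T) (x0 : T) (s : seq T) : T :=
  match s with [::] => x0 | x :: t => foldl mul x t end.

Definition satisfies_identity (K : fieldType) (V : lmodType K)
    (mul : V -> V -> V) (m : nat) (tau : 'S_m) : Prop :=
  forall a : 'I_m -> V,
    mprod mul 0 [seq a i | i <- enum 'I_m]
    = mprod mul 0 [seq a (tau i) | i <- enum 'I_m].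

Definition eventually_commutative (K : fieldType) (V : lmodType K)
    (mul : V -> V -> V) (k : nat) : Prop :=
  forall tau : 'S_k, satisfies_identity mul tau.

Definition swap_first_last (n : nat) : 'S_n :=
  match n return 'S_n with
  | 0 => 1%g
  | k.+1 => tperm (ord0 : 'I_k.+1) ord_max
  end.

(* Main.v *)
Require Import Defs.
From HB Require Import structures.
From mathcomp Require Import all_boot all_order all_algebra all_fingroup.
From mathcomp Require Import zify.



Lemma AL {V : Type} {mul : V -> V -> V} (mA : associative mul) z m B :
  foldl mul (mul z m) B = mul z (foldl mul m B).
Proof. by elim: B m => [|b B IH] m //=; rewrite -mA IH. Qed.

Lemma CL {V : Type} {mul : V -> V -> V} (mA : associative mul) z A m B R :
  foldl mul z (A ++ m :: B ++ R) = foldl mul z (A ++ foldl mul m B :: R).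
Proof. by rewrite !foldl_cat /= foldl_cat AL. Qed.

Lemma T1 {V : Type} {mul : V -> V -> V} (mA : associative mul) {k : nat}
  (Hid : forall x M y, size M = k -> foldl mul x (rcons M y) = foldl mul y (rcons M x))
  x M y : (k <= size M)%N -> foldl mul x (rcons M y) = foldl mul y (rcons M x).
Proof.
case: k Hid => [|k] Hid Hk.
  have comm : forall a b, mul a b = mul b a by move=> a b; exact: (Hid a [::] b).
  case: M Hk => [|m M] _; first exact: Hid.
  rewrite /= !foldl_rcons !AL //.
  set P := foldl mul m M.
  by rewrite -!mA (comm P y) (comm P x) !mA (comm x y).
have E : M = take k M ++ drop k M by rewrite cat_take_drop.
case D: (drop k M) E => [|m M2] E.
  by move: (f_equal size D); rewrite size_drop /=; lia.
rewrite E -!cats1 -!catA /= !CL //.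
set T := take k M; set P := foldl mul m M2.
have h : forall a, T ++ [:: P; a] = rcons (rcons T P) a.
  by move=> a; rewrite -!cats1 -catA.
rewrite (h x) (h y) Hid // size_rcons /T size_takel //.
exact: ltnW.
Qed.

Lemma TF {V : Type} {mul : V -> V -> V} (mA : associative mul) {k : nat}
  (Hid : forall x M y, size M = k -> foldl mul x (rcons M y) = foldl mul y (rcons M x))
  x M y R : (k <= size M)%N -> foldl mul x (M ++ y :: R) = foldl mul y (M ++ x :: R).
Proof.
by move=> Hk; rewrite -!cat_rcons !foldl_cat (T1 mA Hid).
Qed.

Lemma TC {V : Type} {mul : V -> V -> V} (mA : associative mul) {k : nat}
  (Hid : forall x M y, size M = k -> foldl mul x (rcons M y) = foldl mul y (rcons M x))
  z A x M y R : (k <= size M)%N ->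
  foldl mul z (A ++ x :: M ++ y :: R) = foldl mul z (A ++ y :: M ++ x :: R).
Proof.
by move=> Hk; rewrite !foldl_cat /= !AL // (TF mA Hid).
Qed.


Lemma S12 {V : Type} {mul : V -> V -> V} (mA : associative mul) {k : nat}
  (Hid : forall x M y, size M = k -> foldl mul x (rcons M y) = foldl mul y (rcons M x))
  p q Y c d : size Y = k.-1 -> (0 < k)%N ->
  foldl mul p (q :: Y ++ [:: c; d]) = foldl mul q (p :: Y ++ [:: c; d]).
Proof.
move=> hY hk.
transitivity (foldl mul d (q :: Y ++ [:: c; p])).
  have := TF mA Hid p (q :: rcons Y c) d [::]; rewrite /= !cat_rcons; apply.
  rewrite /= size_rcons; lia.
transitivity (foldl mul d (p :: Y ++ [:: c; q])).
  have := TC mA Hid d [::] q (rcons Y c) p [::]; rewrite /= !cat_rcons; apply.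
  rewrite size_rcons; lia.
have := TF mA Hid d (p :: rcons Y c) q [::]; rewrite /= !cat_rcons; apply.
rewrite /= size_rcons; lia.
Qed.

Lemma RL {V : Type} {mul : V -> V -> V} (mA : associative mul) {k : nat}
  (Hid : forall x M y, size M = k -> foldl mul x (rcons M y) = foldl mul y (rcons M x))
  a X z c d : size X = k.-1 -> (0 < k)%N ->
  foldl mul a (rcons X z ++ [:: c; d]) = foldl mul a (z :: X ++ [:: c; d]).
Proof.
move=> hX hk.
transitivity (foldl mul a (rcons X z ++ [:: mul c d])).
  by rewrite !foldl_cat /= mA.
transitivity (foldl mul c (d :: rcons X z ++ [:: a])).
  have := TF mA Hid a (rcons X z) (mul c d) [::]; rewrite /=; apply.
  rewrite size_rcons; lia.
transitivity (foldl mul z (d :: X ++ [:: c; a])).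
  have := TF mA Hid c (d :: X) z [:: a]; rewrite /= !cat_rcons; apply.
  rewrite /=; lia.
transitivity (foldl mul z (a :: X ++ [:: c; d])).
  have := TC mA Hid z [::] d (rcons X c) a [::]; rewrite /= !cat_rcons; apply.
  rewrite size_rcons; lia.
exact: (S12 mA Hid).
Qed.

Lemma BR {V : Type} {mul : V -> V -> V} (mA : associative mul) {k : nat}
  (Hid : forall x M y, size M = k -> foldl mul x (rcons M y) = foldl mul y (rcons M x))
  Z X a c d : size X + size Z = k ->
  foldl mul a ((X ++ Z) ++ [:: c; d]) = foldl mul a ((Z ++ X) ++ [:: c; d]).
Proof.
elim/last_ind: Z X => [|Z z IH] X hs; first by rewrite cats0.
rewrite -rcons_cat (RL mA Hid); last (by move: hs; rewrite size_rcons; lia);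
  last by move: hs; rewrite size_cat size_rcons; lia.
rewrite cat_rcons -IH //=.
by move: hs; rewrite size_rcons /=; lia.
Qed.

Lemma FL {V : Type} {mul : V -> V -> V} (mA : associative mul) {k : nat}
  (Hid : forall x M y, size M = k -> foldl mul x (rcons M y) = foldl mul y (rcons M x))
  x u y v : size u + size v = k.+1 ->
  foldl mul x (u ++ y :: v) = foldl mul y (u ++ x :: v).
Proof.
move=> hs; case: (leqP k (size u)) => hu; first exact: (TF mA Hid x u y v hu).
case/lastP: v hs => [|v1 d] hs; first by move: hs; rewrite /=; lia.
case/lastP: v1 hs => [|v' c] hs; first by move: hs; rewrite size_rcons /=; lia.
have E : forall w : V, u ++ w :: rcons (rcons v' c) d = (u ++ w :: v') ++ [:: c; d].
  by move=> w; rewrite -!cats1 -!catA.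
rewrite !E.
rewrite (BR mA Hid (y :: v') u); last by move: hs; rewrite !size_rcons /=; lia.
rewrite !cat_cons (S12 mA Hid); last (by lia); last by move: hs; rewrite !size_rcons size_cat; lia.
have := BR mA Hid u (x :: v') y c d; rewrite /= => ->; first by [].
by move: hs; rewrite !size_rcons; lia.
Qed.

Lemma SL {V : Type} {mul : V -> V -> V} (mA : associative mul) {k : nat}
  (Hid : forall x M y, size M = k -> foldl mul x (rcons M y) = foldl mul y (rcons M x))
  x0 p x u y v : size p + size u + size v = k.+1 ->
  mprod mul x0 (p ++ x :: u ++ y :: v) = mprod mul x0 (p ++ y :: u ++ x :: v).
Proof.
case: p => [|p0 p] /= hs; first exact: (FL mA Hid).
rewrite (FL mA Hid p0 p x); last by rewrite size_cat /=; lia.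
have E : forall (a b : V) w, p ++ a :: u ++ b :: w = (p ++ a :: u) ++ b :: w.
  by move=> a b w; rewrite -catA.
rewrite E (FL mA Hid x _ y); last by rewrite size_cat /=; lia.
rewrite -E (FL mA Hid y p p0) //; rewrite size_cat /=; lia.
Qed.

Lemma symP {V : eqType} {mul : V -> V -> V} (mA : associative mul) {k : nat}
  (Hid : forall x M y, size M = k -> foldl mul x (rcons M y) = foldl mul y (rcons M x))
  x0 s p t : size p + size s = k.+3 -> perm_eq s t ->
  mprod mul x0 (p ++ s) = mprod mul x0 (p ++ t).
Proof.
elim: s p t => [|x s IH] p t hs hp.
  by have -> : t = [::] by apply/nilP; rewrite /nilp -(perm_size hp).
case: t hp => [|y t] hp; first by move: (perm_size hp).
case: (eqVneq x y) hp => [<-|nxy] hp.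
  rewrite perm_cons in hp; rewrite -!cat_rcons; apply: IH => //.
  by rewrite size_rcons; move: hs => /=; lia.
have : x \in t.
  have := perm_mem hp x; rewrite !in_cons eqxx /= (negbTE nxy) /=.
  by move=> <-.
move=> Ht; move: hp; case/splitPr: Ht => u v hp.
have hsz : size s = size u + size v + 1.
  by move: (perm_size hp); rewrite /= size_cat /=; lia.
rewrite (SL mA Hid); last by move: hs; rewrite /=; lia.
rewrite -!cat_rcons; apply: IH; first by rewrite size_rcons; move: hs => /=; lia.
have h2 : perm_eq (y :: u ++ x :: v) (x :: u ++ y :: v).
  by apply/seq.permP => P; rewrite /= !count_cat /=; lia.
by rewrite cat_rcons -(perm_cons x); apply: perm_trans hp h2.
Qed.

Theorem theorem3p5 (K : fieldType) (V : lmodType K) (mul : V -> V -> V)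
    (n : nat) (hn : (2 <= n)%N) :
  is_assoc_algebra mul ->
  satisfies_identity mul (swap_first_last n) ->
  eventually_commutative mul n.+1.
Proof.
move=> [mA _ _] H.
case: n hn H => [|[|k]] // _ H.
have key : forall (s : seq V) (f : 'I_k.+2 -> nat) s', size s' = k.+2 ->
    (forall i : 'I_k.+2, nth 0%R s (f i) = nth 0%R s' i) ->
    [seq nth 0%R s (f i) | i <- enum 'I_k.+2] = s'.
  move=> s f s' hs' hf; apply: (@eq_from_nth _ 0%R); first by rewrite size_map size_enum_ord hs'.
  move=> i; rewrite size_map size_enum_ord => hi.
  rewrite (nth_map ord0) ?size_enum_ord //.
  have -> : nth ord0 (enum 'I_k.+2) i = Ordinal hi by apply: val_inj; rewrite /= nth_enum_ord.
  exact: hf.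
have Hid : forall x M y, size M = k -> foldl mul x (rcons M y) = foldl mul y (rcons M x).
  move=> x M y hM.
  have := H (fun i => nth 0%R (x :: rcons M y) i).
  have hs : forall a b, size (a :: rcons M b) = k.+2 by move=> a b; rewrite /= size_rcons hM.
  rewrite (key _ (fun i => nat_of_ord i) (x :: rcons M y) (hs x y)) //.
  rewrite (key _ (fun i => nat_of_ord (swap_first_last k.+2 i)) (y :: rcons M x) (hs y x)) //.
  move=> i /=; case: tpermP => [->|->|ni0 nim].
  - by rewrite /= !nth_rcons hM ltnn eqxx.
  - by rewrite /= !nth_rcons hM ltnn eqxx.
  - case: i ni0 nim => [[|j] hj] ni0 nim; first by case: ni0; apply: val_inj.
    have hjk : (j < k)%N.
      rewrite ltnNge; apply/negP => hkj; apply: nim; apply: val_inj => /=; lia.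
    by rewrite /= !nth_rcons hM hjk.
move=> tau a; rewrite /satisfies_identity.
apply: (symP mA Hid 0%R _ [::]); first by rewrite size_map size_enum_ord.
have -> : [seq a (tau i) | i <- enum 'I_k.+3] = map a (map tau (enum (ordinal k.+3))) by elim: (enum _) => //= ? ? ->.
apply: perm_map; apply: uniq_perm; rewrite ?enum_uniq ?(map_inj_uniq (@perm_inj _ tau)) ?enum_uniq //.
move=> i; rewrite mem_enum; apply/esym/mapP; exists (tau^-1 i)%g; by rewrite ?mem_enum ?permKV.
Qed.
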